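(* There exist constants $\mu_0\in(0,1/10)$ and $c>0$, independent of $\mu$, $\varepsilon$ and $\Gamma_0$, with the following property. Let $0<\mu\le\mu_0$ and $\varepsilon\in(0,1)$. Let $q(f)$ be a solution of the ER3BP (with $q=(x-1+\mu,y,z)$) transiting through the Hill's sphere of $P_2$ in the interval $[f_1,f_2]$, i.e. $\|q(f_1)\|=\|q(f_2)\|=\mu^{1/3}$ and $0<\|q(f)\|<\mu^{1/3}$ for all $f\in(f_1,f_2)$, and let $(u(s),\phi(s),U(s),\Phi(s))$ be a solution of the Hamilton equations of the regularized Hamiltonian $\mathcal{K}$ satisfying $l(u,U)=0$ and $\mathcal{K}=0$, related to $q$ by $\phi(s)=f(s)$, $\mathrm{d}f/\mathrm{d}s=\|u(s)\|^2$ and $\pi(u(s))=q(f(s))$ for $s\in[s_1,s_2]$, where $f(s_1)=f_1$, $f(s_2)=f_2$. Set $\Gamma_s=\Gamma(\phi(s),\Phi(s))$ and $\Gamma_0=\Gamma_{s_1}$. If $\Gamma_0>0$ and $\mu<c(1-\varepsilon)^6\Gamma_0^{3/2}$, then $\Gamma_s\in[\Gamma_0/2,\,3\Gamma_0/2]$ for all $s\in[s_1,s_2]$.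
   Context: The ER3BP with mass parameter $\mu$ and eccentricity $\varepsilon$ is given by the Hamiltonian (independent variable the true anomaly $f$ of $P_2$, rotating-pulsating frame with $P_1=(-\mu,0,0)$, $P_2=(1-\mu,0,0)$) $$\mathcal{H}=\tfrac12(p_1^2+p_2^2+p_3^2)+p_1y-xp_2-\frac{1}{1+\varepsilon\cos f}\Big(\frac{1-\mu}{d_1}+\frac{\mu}{d_2}-\tfrac12(x^2+y^2+z^2)\varepsilon\cos f\Big),$$ $d_1=\sqrt{(x+\mu)^2+y^2+z^2}$, $d_2=\sqrt{(x-1+\mu)^2+y^2+z^2}$. Kustaanheimo–Stiefel map: $\pi(u)=(\pi_1,\pi_2,\pi_3)(u)=(u_1^2-u_2^2-u_3^2+u_4^2,\;2u_1u_2-2u_3u_4,\;2u_1u_3+2u_2u_4)$, $u\in\mathbb{R}^4$; $A(u)$ is the $4\times4$ matrix with rows $(u_1,-u_2,-u_3,u_4)$, $(u_2,u_1,-u_4,-u_3)$, $(u_3,u_4,u_1,u_2)$, $(u_4,-u_3,u_2,-u_1)$; $\Lambda$ is the $4\times4$ matrix with only nonzero entries $\Lambda_{12}=-1$, $\Lambda_{21}=1$; $b(u)=2A(u)^T\Lambda A(u)u$; $l(u,U)=u_4U_1-u_3U_2+u_2U_3-u_1U_4$. The regularized Hamiltonian is $$\mathcal{K}(u,\phi,U,\Phi)=\tfrac18\|U-b(u)\|^2-\frac{1}{1+\varepsilon\cos\phi}\Big[(1-\mu)\|u\|^2\Big(\frac{1}{\|\pi(u)+(1,0,0)\|}+\pi_1(u)\Big)+\mu+\tfrac12\|u\|^2\big(\pi_1^2+\pi_2^2-\pi_3^2\varepsilon\cos\phi\big)+\frac{(1-\mu)^2}{2}\|u\|^2\Big]+\Phi\|u\|^2,$$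 with Hamilton equations in the independent variable $s$. Define $\Gamma(\phi,\Phi)=-\Phi+\dfrac{3-4\mu+\mu^2}{2(1+\varepsilon\cos\phi)}$. *)

(* Defs.v *)
From Stdlib Require Import Reals.
From Coquelicot Require Import Coquelicot.
Open Scope R_scope.

Definition upd (v : nat -> R) (i : nat) (t : R) : nat -> R :=
  fun j => if Nat.eqb j i then t else v j.

Definition sum4 (g : nat -> R) : R := g 0%nat + g 1%nat + g 2%nat + g 3%nat.

(* ER3BP. State w : coordinates 0,1,2 = (x,y,z), 3,4,5 = (p1,p2,p3);
   independent variable f (true anomaly).                                  *)
Definition d1 (mu : R) (w : nat -> R) : R :=
  sqrt ((w 0%nat + mu)^2 + (w 1%nat)^2 + (w 2%nat)^2).
Definition d2 (mu : R) (w : nat -> R) : R :=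
  sqrt ((w 0%nat - 1 + mu)^2 + (w 1%nat)^2 + (w 2%nat)^2).

Definition Hfun (mu eps f : R) (w : nat -> R) : R :=
  / 2 * ((w 3%nat)^2 + (w 4%nat)^2 + (w 5%nat)^2)
  + w 3%nat * w 1%nat - w 0%nat * w 4%nat
  - / (1 + eps * cos f) *
      ((1 - mu) / d1 mu w + mu / d2 mu w
       - / 2 * ((w 0%nat)^2 + (w 1%nat)^2 + (w 2%nat)^2) * eps * cos f).

Definition ER3BP_solution (mu eps : R) (w : R -> nat -> R) (f1 f2 : R) : Prop :=
  forall f, f1 <= f <= f2 -> forall i : nat, (i < 3)%nat ->
    is_derive (fun t => w t i) f
      (Derive (fun x => Hfun mu eps f (upd (w f) (i + 3) x)) (w f (i + 3)%nat))
    /\ is_derive (fun t => w t (i + 3)%nat) f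
      (- Derive (fun x => Hfun mu eps f (upd (w f) i x)) (w f i)).

Definition q1 (mu : R) (w : nat -> R) : R := w 0%nat - 1 + mu.
Definition qnorm (mu : R) (w : nat -> R) : R :=
  sqrt ((q1 mu w)^2 + (w 1%nat)^2 + (w 2%nat)^2).

(* Kustaanheimo–Stiefel objects, u = (u 0, u 1, u 2, u 3) = (u1,u2,u3,u4). *)
Definition pi1 (u : nat -> R) : R :=
  (u 0%nat)^2 - (u 1%nat)^2 - (u 2%nat)^2 + (u 3%nat)^2.
Definition pi2 (u : nat -> R) : R := 2 * u 0%nat * u 1%nat - 2 * u 2%nat * u 3%nat.
Definition pi3 (u : nat -> R) : R := 2 * u 0%nat * u 2%nat + 2 * u 1%nat * u 3%nat.

(* A(u), 0-indexed rows/columns. *)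
Definition Amat (u : nat -> R) (i j : nat) : R :=
  match i, j with
  | 0%nat, 0%nat => u 0%nat | 0%nat, 1%nat => - u 1%nat | 0%nat, 2%nat => - u 2%nat | 0%nat, 3%nat => u 3%nat
  | 1%nat, 0%nat => u 1%nat | 1%nat, 1%nat => u 0%nat | 1%nat, 2%nat => - u 3%nat | 1%nat, 3%nat => - u 2%nat
  | 2%nat, 0%nat => u 2%nat | 2%nat, 1%nat => u 3%nat | 2%nat, 2%nat => u 0%nat | 2%nat, 3%nat => u 1%nat
  | 3%nat, 0%nat => u 3%nat | 3%nat, 1%nat => - u 2%nat | 3%nat, 2%nat => u 1%nat | 3%nat, 3%nat => - u 0%nat
  | _, _ => 0
  end.

Definition Lam (i j : nat) : R :=
  match i, j with
  | 0%nat, 1%nat => -1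
  | 1%nat, 0%nat => 1
  | _, _ => 0
  end.

Definition bvec (u : nat -> R) (k : nat) : R :=
  2 * sum4 (fun i => Amat u i k *
        sum4 (fun j => Lam i j * sum4 (fun l => Amat u j l * u l))).

Definition lfun (u U : nat -> R) : R :=
  u 3%nat * U 0%nat - u 2%nat * U 1%nat + u 1%nat * U 2%nat - u 0%nat * U 3%nat.

(* Regularized state st : coordinates 0..3 = u, 4 = phi, 5..8 = U, 9 = Phi. *)
Definition uof (st : nat -> R) : nat -> R := fun i => st i.
Definition Uof (st : nat -> R) : nat -> R := fun i => st (i + 5)%nat.
Definition phiof (st : nat -> R) : R := st 4%nat.
Definition Phiof (st : nat -> R) : R := st 9%nat.

Definition unorm2 (u : nat -> R) : R := sum4 (fun i => (u i)^2).

Definition Kfun (mu eps : R) (st : nat -> R) : R :=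
  let u := uof st in let U := Uof st in let phi := phiof st in
  / 8 * sum4 (fun i => (U i - bvec u i)^2)
  - / (1 + eps * cos phi) *
      ((1 - mu) * unorm2 u *
         (/ sqrt ((pi1 u + 1)^2 + (pi2 u)^2 + (pi3 u)^2) + pi1 u)
       + mu
       + / 2 * unorm2 u * ((pi1 u)^2 + (pi2 u)^2 - (pi3 u)^2 * eps * cos phi)
       + (1 - mu)^2 / 2 * unorm2 u)
  + Phiof st * unorm2 u.

Definition K_solution (mu eps : R) (st : R -> nat -> R) (s1 s2 : R) : Prop :=
  forall s, s1 <= s <= s2 -> forall i : nat, (i < 5)%nat ->
    is_derive (fun t => st t i) s
      (Derive (fun x => Kfun mu eps (upd (st s) (i + 5) x)) (st s (i + 5)%nat))
    /\ is_derive (fun t => st t (i + 5)%nat) s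
      (- Derive (fun x => Kfun mu eps (upd (st s) i x)) (st s i)).

Definition Gamma (mu eps phi Phi : R) : R :=
  - Phi + (3 - 4 * mu + mu^2) / (2 * (1 + eps * cos phi)).

(* Main.v *)
Require Import Defs.
From Stdlib Require Import Reals Lra Psatz Lia.
From Coquelicot Require Import Coquelicot.
Open Scope R_scope.

Definition PP1 a0 a1 a2 a3 := a0^2 - a1^2 - a2^2 + a3^2.
Definition PP2 a0 a1 a2 a3 := 2*a0*a1 - 2*a2*a3.
Definition PP3 a0 a1 a2 a3 := 2*a0*a2 + 2*a1*a3.
Definition RR a0 a1 a2 a3 := a0^2+a1^2+a2^2+a3^2.
Definition BB0 a0 a1 a2 a3 := 2*(-a0*PP2 a0 a1 a2 a3 + a1*PP1 a0 a1 a2 a3).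
Definition BB1 a0 a1 a2 a3 := 2*(a1*PP2 a0 a1 a2 a3 + a0*PP1 a0 a1 a2 a3).
Definition BB2 a0 a1 a2 a3 := 2*(a2*PP2 a0 a1 a2 a3 - a3*PP1 a0 a1 a2 a3).
Definition BB3 a0 a1 a2 a3 := 2*(-a3*PP2 a0 a1 a2 a3 - a2*PP1 a0 a1 a2 a3).
Definition SS a0 a1 a2 a3 := (PP1 a0 a1 a2 a3+1)^2+(PP2 a0 a1 a2 a3)^2+(PP3 a0 a1 a2 a3)^2.

Definition Kx mu eps a0 a1 a2 a3 ph A0 A1 A2 A3 Ph :=
 / 8 * ((A0 - BB0 a0 a1 a2 a3)^2 + (A1 - BB1 a0 a1 a2 a3)^2 + (A2 - BB2 a0 a1 a2 a3)^2 + (A3 - BB3 a0 a1 a2 a3)^2)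
 - / (1 + eps * cos ph) * ((1-mu) * RR a0 a1 a2 a3 * (/ sqrt (SS a0 a1 a2 a3) + PP1 a0 a1 a2 a3) + mu
    + / 2 * RR a0 a1 a2 a3 * ((PP1 a0 a1 a2 a3)^2 + (PP2 a0 a1 a2 a3)^2 - (PP3 a0 a1 a2 a3)^2 * eps * cos ph)
    + (1 - mu)^2 / 2 * RR a0 a1 a2 a3) + Ph * RR a0 a1 a2 a3.

Lemma Kfun_eq mu eps st : Kfun mu eps st =
  Kx mu eps (st 0%nat) (st 1%nat) (st 2%nat) (st 3%nat) (st 4%nat) (st 5%nat) (st 6%nat) (st 7%nat) (st 8%nat) (st 9%nat).
Proof.
  unfold Kfun, Kx, uof, Uof, phiof, Phiof, unorm2, sum4, SS, RR, BB0, BB1, BB2, BB3, PP1, PP2, PP3, pi1, pi2, pi3.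
  simpl.
  replace (bvec (fun i => st i) 0) with (2*(-st 0%nat*(2*st 0%nat*st 1%nat - 2*st 2%nat*st 3%nat) + st 1%nat*(st 0%nat^2 - st 1%nat^2 - st 2%nat^2 + st 3%nat^2))) by (unfold bvec, sum4, Amat, Lam; simpl; ring).
  replace (bvec (fun i => st i) 1) with (2*(st 1%nat*(2*st 0%nat*st 1%nat - 2*st 2%nat*st 3%nat) + st 0%nat*(st 0%nat^2 - st 1%nat^2 - st 2%nat^2 + st 3%nat^2))) by (unfold bvec, sum4, Amat, Lam; simpl; ring).
  replace (bvec (fun i => st i) 2) with (2*(st 2%nat*(2*st 0%nat*st 1%nat - 2*st 2%nat*st 3%nat) - st 3%nat*(st 0%nat^2 - st 1%nat^2 - st 2%nat^2 + st 3%nat^2))) by (unfold bvec, sum4, Amat, Lam; simpl; ring).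
  replace (bvec (fun i => st i) 3) with (2*(-st 3%nat*(2*st 0%nat*st 1%nat - 2*st 2%nat*st 3%nat) - st 2%nat*(st 0%nat^2 - st 1%nat^2 - st 2%nat^2 + st 3%nat^2))) by (unfold bvec, sum4, Amat, Lam; simpl; ring).
  reflexivity.
Qed.
Definition dP1 a0 a1 a2 a3 d0 d1 d2 d3 := 2*(a0*d0 - a1*d1 - a2*d2 + a3*d3).
Definition dP2 a0 a1 a2 a3 d0 d1 d2 d3 := 2*(d0*a1 + a0*d1 - d2*a3 - a2*d3).
Definition dP3 a0 a1 a2 a3 d0 d1 d2 d3 := 2*(d0*a2 + a0*d2 + d1*a3 + a1*d3).
Definition dRR a0 a1 a2 a3 d0 d1 d2 d3 := 2*(a0*d0+a1*d1+a2*d2+a3*d3).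
Definition dB0 a0 a1 a2 a3 d0 d1 d2 d3 := 2*(-d0*PP2 a0 a1 a2 a3 - a0*dP2 a0 a1 a2 a3 d0 d1 d2 d3 + d1*PP1 a0 a1 a2 a3 + a1*dP1 a0 a1 a2 a3 d0 d1 d2 d3).
Definition dB1 a0 a1 a2 a3 d0 d1 d2 d3 := 2*(d1*PP2 a0 a1 a2 a3 + a1*dP2 a0 a1 a2 a3 d0 d1 d2 d3 + d0*PP1 a0 a1 a2 a3 + a0*dP1 a0 a1 a2 a3 d0 d1 d2 d3).
Definition dB2 a0 a1 a2 a3 d0 d1 d2 d3 := 2*(d2*PP2 a0 a1 a2 a3 + a2*dP2 a0 a1 a2 a3 d0 d1 d2 d3 - d3*PP1 a0 a1 a2 a3 - a3*dP1 a0 a1 a2 a3 d0 d1 d2 d3).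
Definition dB3 a0 a1 a2 a3 d0 d1 d2 d3 := 2*(-d3*PP2 a0 a1 a2 a3 - a3*dP2 a0 a1 a2 a3 d0 d1 d2 d3 - d2*PP1 a0 a1 a2 a3 - a2*dP1 a0 a1 a2 a3 d0 d1 d2 d3).
Definition dSS a0 a1 a2 a3 d0 d1 d2 d3 := 2*(PP1 a0 a1 a2 a3+1)*dP1 a0 a1 a2 a3 d0 d1 d2 d3 + 2*PP2 a0 a1 a2 a3*dP2 a0 a1 a2 a3 d0 d1 d2 d3 + 2*PP3 a0 a1 a2 a3*dP3 a0 a1 a2 a3 d0 d1 d2 d3.

Definition dKa mu eps a0 a1 a2 a3 ph A0 A1 A2 A3 Ph d0 d1 d2 d3 :=
 / 4 * ((A0 - BB0 a0 a1 a2 a3) * (- dB0 a0 a1 a2 a3 d0 d1 d2 d3) + (A1 - BB1 a0 a1 a2 a3) * (- dB1 a0 a1 a2 a3 d0 d1 d2 d3)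
      + (A2 - BB2 a0 a1 a2 a3) * (- dB2 a0 a1 a2 a3 d0 d1 d2 d3) + (A3 - BB3 a0 a1 a2 a3) * (- dB3 a0 a1 a2 a3 d0 d1 d2 d3))
 - / (1 + eps * cos ph) * ((1-mu) * (dRR a0 a1 a2 a3 d0 d1 d2 d3 * (/ sqrt (SS a0 a1 a2 a3) + PP1 a0 a1 a2 a3)
        + RR a0 a1 a2 a3 * (- dSS a0 a1 a2 a3 d0 d1 d2 d3 / (2 * sqrt (SS a0 a1 a2 a3) ^ 3) + dP1 a0 a1 a2 a3 d0 d1 d2 d3))
    + / 2 * (dRR a0 a1 a2 a3 d0 d1 d2 d3 * ((PP1 a0 a1 a2 a3)^2 + (PP2 a0 a1 a2 a3)^2 - (PP3 a0 a1 a2 a3)^2 * eps * cos ph)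
       + RR a0 a1 a2 a3 * (2 * PP1 a0 a1 a2 a3 * dP1 a0 a1 a2 a3 d0 d1 d2 d3 + 2 * PP2 a0 a1 a2 a3 * dP2 a0 a1 a2 a3 d0 d1 d2 d3
            - 2 * PP3 a0 a1 a2 a3 * dP3 a0 a1 a2 a3 d0 d1 d2 d3 * eps * cos ph))
    + (1 - mu)^2 / 2 * dRR a0 a1 a2 a3 d0 d1 d2 d3) + Ph * dRR a0 a1 a2 a3 d0 d1 d2 d3.

Lemma dK0 mu eps a0 a1 a2 a3 ph A0 A1 A2 A3 Ph :
  0 < SS a0 a1 a2 a3 -> 1 + eps * cos ph <> 0 ->
  is_derive (fun x => Kx mu eps x a1 a2 a3 ph A0 A1 A2 A3 Ph) a0 (dKa mu eps a0 a1 a2 a3 ph A0 A1 A2 A3 Ph 1 0 0 0).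
Proof.
  intros HS HD.
  unfold Kx, dKa, dB0, dB1, dB2, dB3, dP1, dP2, dP3, dRR, dSS, BB0, BB1, BB2, BB3, SS, RR, PP1, PP2, PP3.
  
  assert (Hq : sqrt (SS a0 a1 a2 a3) <> 0) by (apply Rgt_not_eq, sqrt_lt_R0; exact HS).
  unfold SS, PP1, PP2, PP3 in HS, Hq.
  auto_derive.
  - repeat split.
    + eapply Rlt_le_trans; [exact HS| right; ring].
    + intro H0; apply Hq; rewrite <- H0; f_equal; ring.
  - repeat match goal with |- context [sqrt ?e] =>
      let t := constr:(SS a0 a1 a2 a3) in assert_fails (constr_eq e t);
      replace e with t by (unfold SS,PP1,PP2,PP3; ring) end.
    clear Hq; assert (Hq : sqrt (SS a0 a1 a2 a3) <> 0) by (apply Rgt_not_eq, sqrt_lt_R0; unfold SS, PP1,PP2,PP3; exact HS).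
    lazymatch goal with |- ?a = ?b => change (@eq R a b) end. unfold dP1, dP2, dP3. field; auto.
Qed.
Definition Xrem mu eps a0 a1 a2 a3 ph :=
  let p1 := PP1 a0 a1 a2 a3 in let r := RR a0 a1 a2 a3 in let q := sqrt (SS a0 a1 a2 a3) in
  (1-mu) * (3 * (/ q + p1 - 1) + 2 * (p1 - (p1 + r^2) / q^3))
  + 7/2 * ((PP1 a0 a1 a2 a3)^2 + (PP2 a0 a1 a2 a3)^2 - (PP3 a0 a1 a2 a3)^2 * eps * cos ph).

Definition Jdot mu eps a0 a1 a2 a3 ph A0 A1 A2 A3 Ph :=
  ((A0 - BB0 a0 a1 a2 a3)/4 * A0 + a0 * (- dKa mu eps a0 a1 a2 a3 ph A0 A1 A2 A3 Ph 1 0 0 0)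
 + (A1 - BB1 a0 a1 a2 a3)/4 * A1 + a1 * (- dKa mu eps a0 a1 a2 a3 ph A0 A1 A2 A3 Ph 0 1 0 0)
 + (A2 - BB2 a0 a1 a2 a3)/4 * A2 + a2 * (- dKa mu eps a0 a1 a2 a3 ph A0 A1 A2 A3 Ph 0 0 1 0)
 + (A3 - BB3 a0 a1 a2 a3)/4 * A3 + a3 * (- dKa mu eps a0 a1 a2 a3 ph A0 A1 A2 A3 Ph 0 0 0 1)) / 2.

Lemma Jdot_eq mu eps a0 a1 a2 a3 ph A0 A1 A2 A3 Ph :
  0 < SS a0 a1 a2 a3 -> 1 + eps * cos ph <> 0 ->
  Jdot mu eps a0 a1 a2 a3 ph A0 A1 A2 A3 Ph =
  ((A0 - BB0 a0 a1 a2 a3)/4 + BB0 a0 a1 a2 a3)^2 + ((A1 - BB1 a0 a1 a2 a3)/4 + BB1 a0 a1 a2 a3)^2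
  + ((A2 - BB2 a0 a1 a2 a3)/4 + BB2 a0 a1 a2 a3)^2 + ((A3 - BB3 a0 a1 a2 a3)/4 + BB3 a0 a1 a2 a3)^2
  - ((BB0 a0 a1 a2 a3)^2 + (BB1 a0 a1 a2 a3)^2 + (BB2 a0 a1 a2 a3)^2 + (BB3 a0 a1 a2 a3)^2)
  + 3/2 * Gamma mu eps ph Ph * RR a0 a1 a2 a3
  + (mu + RR a0 a1 a2 a3 * Xrem mu eps a0 a1 a2 a3 ph) / (2 * (1 + eps * cos ph))
  + Kx mu eps a0 a1 a2 a3 ph A0 A1 A2 A3 Ph / 2.
Proof.
  intros HS HD.
  assert (Hq : sqrt (SS a0 a1 a2 a3) <> 0) by (apply Rgt_not_eq, sqrt_lt_R0; exact HS).
  set (q := sqrt (SS a0 a1 a2 a3)) in *.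
  unfold Jdot, Xrem, Kx, Gamma, dKa, dSS, dB0, dB1, dB2, dB3, dP1, dP2, dP3, dRR, BB0, BB1, BB2, BB3, RR, PP1, PP2, PP3.
  cbv zeta; fold q.
  field; auto.
Qed.
Lemma q_bounds p1 r q : 0 <= r <= 1/10 -> p1^2 <= r^2 -> 0 < q -> q^2 = 1 + 2*p1 + r^2 ->
  89/100 <= q <= 11/10 /\ -(6/5) * r <= q - 1 <= 6/5 * r.
Proof.
  intros [Hr0 Hr1] Hp Hq Hq2.
  assert (Hp1 : - r <= p1 <= r) by (split; nra).
  assert (89/100 <= q <= 11/10) by (split; nra).
  split; auto.
  assert (Hm : (q - 1) * (q + 1) = 2*p1 + r^2) by nra.
  split; nra.
Qed.

Lemma ineq1 p1 r q : 0 <= r <= 1/10 -> p1^2 <= r^2 -> 0 < q -> q^2 = 1 + 2*p1 + r^2 ->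
  Rabs (/ q + p1 - 1) <= 7 * r^2.
Proof.
  intros Hr Hp Hq Hq2.
  destruct (q_bounds p1 r q Hr Hp Hq Hq2) as [[Hqa Hqb] Hq1].
  assert (Hp1 : - r <= p1 <= r) by (split; nra).
  set (E := q * (1 - p1) - 1).
  assert (HE : E * (q*(1-p1) + 1) = -3*p1^2 + 2*p1^3 + r^2*(1-p1)^2) by (unfold E; nra).
  assert (Hpos : 1 <= q*(1-p1) + 1) by nra.
  assert (HEb : - (5 * r^2) <= E <= 5 * r^2).
  { assert (Hr2 : - (5 * r^2) <= -3*p1^2 + 2*p1^3 + r^2*(1-p1)^2 <= 5 * r^2).
    { assert (Hc : - (r^3) <= p1^3 <= r^3).
      { split; [|]; nra. }
      assert ((1-p1)^2 <= 2) by nra.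
      assert (r^3 <= r^2/10) by nra.
      split; nra. }
    rewrite <- HE in Hr2. destruct (Rle_or_lt 0 E).
    - assert (0 <= E * (q*(1-p1))) by (apply Rmult_le_pos; nra). split; nra.
    - assert (E * (q*(1-p1)) <= 0) by (assert (0 < q*(1-p1)) by nra; nra). split; nra. }
  replace (/ q + p1 - 1) with (- E / q) by (unfold E; field; lra).
  apply Rabs_le. split.
  - apply (Rmult_le_reg_r q); [lra|]. unfold Rdiv. rewrite Rmult_assoc, Rinv_l by lra. nra.
  - apply (Rmult_le_reg_r q); [lra|]. unfold Rdiv. rewrite Rmult_assoc, Rinv_l by lra. nra.
Qed.

Lemma ineq2 p1 r q : 0 <= r <= 1/10 -> p1^2 <= r^2 -> 0 < q -> q^2 = 1 + 2*p1 + r^2 ->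
  Rabs (p1 - (p1 + r^2) / q^3) <= 8 * r^2.
Proof.
  intros Hr Hp Hq Hq2.
  destruct (q_bounds p1 r q Hr Hp Hq Hq2) as [[Hqa Hqb] Hq1].
  assert (Hp1 : - r <= p1 <= r) by (split; nra).
  assert (Hq3 : 7/10 <= q^3) by nra.
  assert (Hs : 2 <= q^2 + q + 1 <= 4) by nra.
  assert (Hd : - (4 * r) <= q^3 - 1 <= 4 * r).
  { replace (q^3 - 1) with ((q - 1) * (q^2 + q + 1)) by ring. split; nra. }
  assert (Hn : - (5 * r^2) <= p1 * (q^3 - 1) - r^2 <= 5 * r^2) by (split; nra).
  replace (p1 - (p1 + r^2) / q^3) with ((p1 * (q^3 - 1) - r^2) / q^3) by (field; nra).
  apply Rabs_le. split.
  - apply (Rmult_le_reg_r (q^3)); [nra|]. unfold Rdiv. rewrite Rmult_assoc, Rinv_l by nra. nra.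
  - apply (Rmult_le_reg_r (q^3)); [nra|]. unfold Rdiv. rewrite Rmult_assoc, Rinv_l by nra. nra.
Qed.
Definition Wx mu eps a0 a1 a2 a3 ph :=
  (1-mu) * RR a0 a1 a2 a3 * (/ sqrt (SS a0 a1 a2 a3) + PP1 a0 a1 a2 a3) + mu
    + / 2 * RR a0 a1 a2 a3 * ((PP1 a0 a1 a2 a3)^2 + (PP2 a0 a1 a2 a3)^2 - (PP3 a0 a1 a2 a3)^2 * eps * cos ph)
    + (1 - mu)^2 / 2 * RR a0 a1 a2 a3.

Definition dKph mu eps a0 a1 a2 a3 ph :=
  - (eps * sin ph / (1 + eps * cos ph)^2) * Wx mu eps a0 a1 a2 a3 ph
  - / (1 + eps * cos ph) * (/ 2 * RR a0 a1 a2 a3 * ((PP3 a0 a1 a2 a3)^2 * eps * sin ph)).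

Lemma dKph_ok mu eps a0 a1 a2 a3 ph A0 A1 A2 A3 Ph :
  0 < SS a0 a1 a2 a3 -> 1 + eps * cos ph <> 0 ->
  is_derive (fun x => Kx mu eps a0 a1 a2 a3 x A0 A1 A2 A3 Ph) ph (dKph mu eps a0 a1 a2 a3 ph).
Proof.
  intros HS HD. unfold Kx, dKph, Wx.
  set (q := sqrt (SS a0 a1 a2 a3)). set (r := RR a0 a1 a2 a3).
  set (p1 := PP1 a0 a1 a2 a3). set (p2 := PP2 a0 a1 a2 a3). set (p3 := PP3 a0 a1 a2 a3).
  set (b0 := BB0 a0 a1 a2 a3). set (b1 := BB1 a0 a1 a2 a3). set (b2 := BB2 a0 a1 a2 a3). set (b3 := BB3 a0 a1 a2 a3).
  auto_derive.
  - repeat split; auto.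
  - lazymatch goal with |- ?a = ?b => change (@eq R a b) end. field; split; auto. apply Rgt_not_eq, sqrt_lt_R0; exact HS.
Qed.

Lemma dKU0 mu eps a0 a1 a2 a3 ph A0 A1 A2 A3 Ph :
  is_derive (fun x => Kx mu eps a0 a1 a2 a3 ph x A1 A2 A3 Ph) A0 ((A0 - BB0 a0 a1 a2 a3)/4).
Proof.
  unfold Kx.
  set (q := sqrt (SS a0 a1 a2 a3)). set (r := RR a0 a1 a2 a3).
  set (p1 := PP1 a0 a1 a2 a3). set (p2 := PP2 a0 a1 a2 a3). set (p3 := PP3 a0 a1 a2 a3).
  set (b0 := BB0 a0 a1 a2 a3). set (b1 := BB1 a0 a1 a2 a3). set (b2 := BB2 a0 a1 a2 a3). set (b3 := BB3 a0 a1 a2 a3).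
  auto_derive; auto.
  lazymatch goal with |- ?a = ?b => change (@eq R a b) end. field.
Qed.

Lemma dKPh mu eps a0 a1 a2 a3 ph A0 A1 A2 A3 Ph :
  is_derive (fun x => Kx mu eps a0 a1 a2 a3 ph A0 A1 A2 A3 x) Ph (RR a0 a1 a2 a3).
Proof.
  unfold Kx.
  set (q := sqrt (SS a0 a1 a2 a3)). set (r := RR a0 a1 a2 a3).
  set (p1 := PP1 a0 a1 a2 a3). set (p2 := PP2 a0 a1 a2 a3). set (p3 := PP3 a0 a1 a2 a3).
  set (b0 := BB0 a0 a1 a2 a3). set (b1 := BB1 a0 a1 a2 a3). set (b2 := BB2 a0 a1 a2 a3). set (b3 := BB3 a0 a1 a2 a3).
  auto_derive; auto.
  lazymatch goal with |- ?a = ?b => change (@eq R a b) end. ring.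
Qed.

Lemma dK1 mu eps a0 a1 a2 a3 ph A0 A1 A2 A3 Ph :
  0 < SS a0 a1 a2 a3 -> 1 + eps * cos ph <> 0 ->
  is_derive (fun x => Kx mu eps a0 x a2 a3 ph A0 A1 A2 A3 Ph) a1 (dKa mu eps a0 a1 a2 a3 ph A0 A1 A2 A3 Ph 0 1 0 0).
Proof.
  intros HS HD.
  unfold Kx, dKa, dB0, dB1, dB2, dB3, dP1, dP2, dP3, dRR, dSS, BB0, BB1, BB2, BB3, SS, RR, PP1, PP2, PP3.
  
  assert (Hq : sqrt (SS a0 a1 a2 a3) <> 0) by (apply Rgt_not_eq, sqrt_lt_R0; exact HS).
  unfold SS, PP1, PP2, PP3 in HS, Hq.
  auto_derive.
  - repeat split.
    + eapply Rlt_le_trans; [exact HS| right; ring].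
    + intro H0; apply Hq; rewrite <- H0; f_equal; ring.
  - repeat match goal with |- context [sqrt ?e] =>
      let t := constr:(SS a0 a1 a2 a3) in assert_fails (constr_eq e t);
      replace e with t by (unfold SS,PP1,PP2,PP3; ring) end.
    clear Hq; assert (Hq : sqrt (SS a0 a1 a2 a3) <> 0) by (apply Rgt_not_eq, sqrt_lt_R0; unfold SS, PP1,PP2,PP3; exact HS).
    lazymatch goal with |- ?a = ?b => change (@eq R a b) end. unfold dP1, dP2, dP3. field; auto.
Qed.

Lemma dK2 mu eps a0 a1 a2 a3 ph A0 A1 A2 A3 Ph :
  0 < SS a0 a1 a2 a3 -> 1 + eps * cos ph <> 0 ->
  is_derive (fun x => Kx mu eps a0 a1 x a3 ph A0 A1 A2 A3 Ph) a2 (dKa mu eps a0 a1 a2 a3 ph A0 A1 A2 A3 Ph 0 0 1 0).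
Proof.
  intros HS HD.
  unfold Kx, dKa, dB0, dB1, dB2, dB3, dP1, dP2, dP3, dRR, dSS, BB0, BB1, BB2, BB3, SS, RR, PP1, PP2, PP3.
  
  assert (Hq : sqrt (SS a0 a1 a2 a3) <> 0) by (apply Rgt_not_eq, sqrt_lt_R0; exact HS).
  unfold SS, PP1, PP2, PP3 in HS, Hq.
  auto_derive.
  - repeat split.
    + eapply Rlt_le_trans; [exact HS| right; ring].
    + intro H0; apply Hq; rewrite <- H0; f_equal; ring.
  - repeat match goal with |- context [sqrt ?e] =>
      let t := constr:(SS a0 a1 a2 a3) in assert_fails (constr_eq e t);
      replace e with t by (unfold SS,PP1,PP2,PP3; ring) end.
    clear Hq; assert (Hq : sqrt (SS a0 a1 a2 a3) <> 0) by (apply Rgt_not_eq, sqrt_lt_R0; unfold SS, PP1,PP2,PP3; exact HS).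
    lazymatch goal with |- ?a = ?b => change (@eq R a b) end. unfold dP1, dP2, dP3. field; auto.
Qed.

Lemma dK3 mu eps a0 a1 a2 a3 ph A0 A1 A2 A3 Ph :
  0 < SS a0 a1 a2 a3 -> 1 + eps * cos ph <> 0 ->
  is_derive (fun x => Kx mu eps a0 a1 a2 x ph A0 A1 A2 A3 Ph) a3 (dKa mu eps a0 a1 a2 a3 ph A0 A1 A2 A3 Ph 0 0 0 1).
Proof.
  intros HS HD.
  unfold Kx, dKa, dB0, dB1, dB2, dB3, dP1, dP2, dP3, dRR, dSS, BB0, BB1, BB2, BB3, SS, RR, PP1, PP2, PP3.
  
  assert (Hq : sqrt (SS a0 a1 a2 a3) <> 0) by (apply Rgt_not_eq, sqrt_lt_R0; exact HS).
  unfold SS, PP1, PP2, PP3 in HS, Hq.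
  auto_derive.
  - repeat split.
    + eapply Rlt_le_trans; [exact HS| right; ring].
    + intro H0; apply Hq; rewrite <- H0; f_equal; ring.
  - repeat match goal with |- context [sqrt ?e] =>
      let t := constr:(SS a0 a1 a2 a3) in assert_fails (constr_eq e t);
      replace e with t by (unfold SS,PP1,PP2,PP3; ring) end.
    clear Hq; assert (Hq : sqrt (SS a0 a1 a2 a3) <> 0) by (apply Rgt_not_eq, sqrt_lt_R0; unfold SS, PP1,PP2,PP3; exact HS).
    lazymatch goal with |- ?a = ?b => change (@eq R a b) end. unfold dP1, dP2, dP3. field; auto.
Qed.

Lemma dKU1 mu eps a0 a1 a2 a3 ph A0 A1 A2 A3 Ph :
  is_derive (fun x => Kx mu eps a0 a1 a2 a3 ph A0 x A2 A3 Ph) A1 ((A1 - BB1 a0 a1 a2 a3)/4).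
Proof.
  unfold Kx.
  set (q := sqrt (SS a0 a1 a2 a3)). set (r := RR a0 a1 a2 a3).
  set (p1 := PP1 a0 a1 a2 a3). set (p2 := PP2 a0 a1 a2 a3). set (p3 := PP3 a0 a1 a2 a3).
  set (b0 := BB0 a0 a1 a2 a3). set (b1 := BB1 a0 a1 a2 a3). set (b2 := BB2 a0 a1 a2 a3). set (b3 := BB3 a0 a1 a2 a3).
  auto_derive; auto.
  lazymatch goal with |- ?a = ?b => change (@eq R a b) end. field.
Qed.

Lemma dKU2 mu eps a0 a1 a2 a3 ph A0 A1 A2 A3 Ph :
  is_derive (fun x => Kx mu eps a0 a1 a2 a3 ph A0 A1 x A3 Ph) A2 ((A2 - BB2 a0 a1 a2 a3)/4).
Proof.
  unfold Kx.
  set (q := sqrt (SS a0 a1 a2 a3)). set (r := RR a0 a1 a2 a3).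
  set (p1 := PP1 a0 a1 a2 a3). set (p2 := PP2 a0 a1 a2 a3). set (p3 := PP3 a0 a1 a2 a3).
  set (b0 := BB0 a0 a1 a2 a3). set (b1 := BB1 a0 a1 a2 a3). set (b2 := BB2 a0 a1 a2 a3). set (b3 := BB3 a0 a1 a2 a3).
  auto_derive; auto.
  lazymatch goal with |- ?a = ?b => change (@eq R a b) end. field.
Qed.

Lemma dKU3 mu eps a0 a1 a2 a3 ph A0 A1 A2 A3 Ph :
  is_derive (fun x => Kx mu eps a0 a1 a2 a3 ph A0 A1 A2 x Ph) A3 ((A3 - BB3 a0 a1 a2 a3)/4).
Proof.
  unfold Kx.
  set (q := sqrt (SS a0 a1 a2 a3)). set (r := RR a0 a1 a2 a3).
  set (p1 := PP1 a0 a1 a2 a3). set (p2 := PP2 a0 a1 a2 a3). set (p3 := PP3 a0 a1 a2 a3).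
  set (b0 := BB0 a0 a1 a2 a3). set (b1 := BB1 a0 a1 a2 a3). set (b2 := BB2 a0 a1 a2 a3). set (b3 := BB3 a0 a1 a2 a3).
  auto_derive; auto.
  lazymatch goal with |- ?a = ?b => change (@eq R a b) end. field.
Qed.

Lemma abs_div_le x d m B : 0 < m -> m <= d -> Rabs x <= B -> Rabs (x / d) <= B / m.
Proof.
  intros Hm Hd Hx. unfold Rdiv. rewrite Rabs_mult, Rabs_inv, (Rabs_pos_eq d) by lra.
  apply Rmult_le_compat; try apply Rabs_pos; auto.
  left; apply Rinv_0_lt_compat; lra.
  apply Rinv_le_contravar; lra.
Qed.

Lemma KS_id a0 a1 a2 a3 :
  (PP1 a0 a1 a2 a3)^2 + (PP2 a0 a1 a2 a3)^2 + (PP3 a0 a1 a2 a3)^2 = (RR a0 a1 a2 a3)^2.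
Proof. unfold PP1, PP2, PP3, RR. ring. Qed.

Lemma SS_id a0 a1 a2 a3 : SS a0 a1 a2 a3 = 1 + 2 * PP1 a0 a1 a2 a3 + (RR a0 a1 a2 a3)^2.
Proof. unfold SS, PP1, PP2, PP3, RR. ring. Qed.

Lemma RR_nonneg a0 a1 a2 a3 : 0 <= RR a0 a1 a2 a3.
Proof. unfold RR. nra. Qed.

Lemma SS_pos a0 a1 a2 a3 : RR a0 a1 a2 a3 <= 1/10 -> 0 < SS a0 a1 a2 a3.
Proof.
  intros Hr. pose proof (KS_id a0 a1 a2 a3). pose proof (RR_nonneg a0 a1 a2 a3).
  rewrite SS_id.
  assert (- RR a0 a1 a2 a3 <= PP1 a0 a1 a2 a3) by nra. nra.
Qed.

Definition Gdot mu eps a0 a1 a2 a3 ph :=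
  dKph mu eps a0 a1 a2 a3 ph + (3 - 4*mu + mu^2) * eps * sin ph * RR a0 a1 a2 a3 / (2 * (1+eps*cos ph)^2).

Lemma Gdot_bound mu eps a0 a1 a2 a3 ph :
  0 < mu < 1 -> 0 < eps < 1 -> RR a0 a1 a2 a3 <= 1/10 -> (RR a0 a1 a2 a3)^3 <= mu ->
  Rabs (Gdot mu eps a0 a1 a2 a3 ph) <= 9 * mu / (1 - eps)^2.
Proof.
  intros Hmu He Hr Hr3.
  pose proof (KS_id a0 a1 a2 a3) as HK. pose proof (RR_nonneg a0 a1 a2 a3) as Hr0.
  pose proof (SS_pos a0 a1 a2 a3 Hr) as HS. pose proof (SS_id a0 a1 a2 a3) as HSid.
  pose proof (COS_bound ph) as Hc. pose proof (SIN_bound ph) as Hs.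
  assert (Hq : 0 < sqrt (SS a0 a1 a2 a3)) by (apply sqrt_lt_R0; exact HS).
  assert (Hq2 : (sqrt (SS a0 a1 a2 a3))^2 = SS a0 a1 a2 a3) by (simpl; rewrite Rmult_1_r; apply sqrt_sqrt; lra).
  unfold Gdot, dKph, Wx.
  set (q := sqrt (SS a0 a1 a2 a3)) in *.
  set (r := RR a0 a1 a2 a3) in *.
  set (p1 := PP1 a0 a1 a2 a3) in *. set (p2 := PP2 a0 a1 a2 a3) in *. set (p3 := PP3 a0 a1 a2 a3) in *.
  set (c := cos ph) in *. set (s := sin ph) in *.
  assert (HD : 1 - eps <= 1 + eps * c) by nra.
  set (D := 1 + eps * c) in *.
  set (Y := (1-mu) * (/ q + p1 - 1) + / 2 * (p1^2 + p2^2 - p3^2 * eps * c)).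
  assert (Hid : - (eps * s / D^2) * ((1-mu) * r * (/ q + p1) + mu + / 2 * r * (p1^2 + p2^2 - p3^2 * eps * c) + (1 - mu)^2 / 2 * r)
     - / D * (/ 2 * r * (p3^2 * eps * s)) + (3 - 4*mu + mu^2) * eps * s * r / (2 * D^2)
     = (eps * s) * ((- mu - r * Y) / D^2 - r * p3^2 / (2 * D))).
  { unfold Y. field. split; [lra|]. lra. }
  rewrite Hid; clear Hid.
  assert (Hp1 : p1^2 <= r^2) by nra.
  assert (HI1 := ineq1 p1 r q ltac:(lra) Hp1 Hq ltac:(lra)).
  assert (HP : Rabs (p1^2 + p2^2 - p3^2 * eps * c) <= r^2).
  { apply Rabs_le. assert (-1 <= eps * c <= 1) by (split; nra). split; nra. }
  assert (HY : Rabs Y <= 15/2 * r^2).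
  { unfold Y. eapply Rle_trans; [apply Rabs_triang|].
    rewrite (Rabs_mult (1-mu)), (Rabs_mult (/2)), (Rabs_pos_eq (1-mu)) by lra.
    rewrite (Rabs_pos_eq (/2)) by lra.
    assert (0 <= Rabs (/ q + p1 - 1)) by apply Rabs_pos. nra. }
  assert (HZ1 : Rabs ((- mu - r * Y) / D^2) <= (17/2 * mu) / (1 - eps)^2).
  { apply abs_div_le. nra. nra.
    eapply Rle_trans; [apply Rabs_triang|]. rewrite !Rabs_Ropp, Rabs_mult, (Rabs_pos_eq mu), (Rabs_pos_eq r) by lra.
    assert (0 <= Rabs Y) by apply Rabs_pos. nra. }
  assert (HZ2 : Rabs (r * p3^2 / (2 * D)) <= (1/2 * mu) / (1 - eps)^2).
  { apply Rle_trans with (mu / (2 * (1 - eps))).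
    - apply abs_div_le. nra. nra. rewrite Rabs_pos_eq by nra. nra.
    - replace ((1/2*mu)/(1-eps)^2) with ((mu/(2*(1-eps))) * / (1-eps)) by (field; lra).
      rewrite <- (Rmult_1_r (mu/(2*(1-eps)))) at 1. apply Rmult_le_compat_l.
      + apply Rlt_le, Rdiv_lt_0_compat; lra.
      + rewrite <- Rinv_1. apply Rinv_le_contravar; lra. }
  rewrite Rabs_mult.
  assert (Hes : Rabs (eps * s) <= 1).
  { rewrite Rabs_mult, (Rabs_pos_eq eps) by lra. assert (Rabs s <= 1) by (apply Rabs_le; lra).
    assert (0 <= Rabs s) by apply Rabs_pos. nra. }
  assert (Hsum : Rabs ((- mu - r * Y) / D^2 - r * p3^2 / (2 * D)) <= 9 * mu / (1 - eps)^2).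
  { unfold Rminus at 1. eapply Rle_trans; [apply Rabs_triang|]. rewrite Rabs_Ropp.
    replace (9 * mu / (1 - eps)^2) with ((17/2 * mu) / (1 - eps)^2 + (1/2 * mu) / (1 - eps)^2) by (field; lra).
    lra. }
  assert (0 <= Rabs ((- mu - r * Y) / D^2 - r * p3^2 / (2 * D))) by apply Rabs_pos.
  assert (0 <= Rabs (eps * s)) by apply Rabs_pos.
  nra.
Qed.

Lemma BB_sq a0 a1 a2 a3 :
  (BB0 a0 a1 a2 a3)^2 + (BB1 a0 a1 a2 a3)^2 + (BB2 a0 a1 a2 a3)^2 + (BB3 a0 a1 a2 a3)^2
  = 4 * RR a0 a1 a2 a3 * ((PP1 a0 a1 a2 a3)^2 + (PP2 a0 a1 a2 a3)^2).
Proof. unfold BB0, BB1, BB2, BB3, RR, PP1, PP2. ring. Qed.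

Lemma Jdot_bound mu eps a0 a1 a2 a3 ph A0 A1 A2 A3 Ph :
  0 < mu < 1 -> 0 < eps < 1 -> RR a0 a1 a2 a3 <= 1/10 ->
  Kx mu eps a0 a1 a2 a3 ph A0 A1 A2 A3 Ph = 0 ->
  100 * (RR a0 a1 a2 a3)^2 <= Gamma mu eps ph Ph * (1 - eps) ->
  mu / 4 <= Jdot mu eps a0 a1 a2 a3 ph A0 A1 A2 A3 Ph.
Proof.
  intros Hmu He Hr HK0 HG.
  pose proof (KS_id a0 a1 a2 a3) as HK. pose proof (RR_nonneg a0 a1 a2 a3) as Hr0.
  pose proof (SS_pos a0 a1 a2 a3 Hr) as HS. pose proof (SS_id a0 a1 a2 a3) as HSid.
  pose proof (COS_bound ph) as Hc.
  assert (HD0 : 1 - eps <= 1 + eps * cos ph <= 1 + eps) by (split; nra).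
  rewrite Jdot_eq by (auto; lra).
  rewrite HK0. pose proof (BB_sq a0 a1 a2 a3) as HB.
  assert (Hq : 0 < sqrt (SS a0 a1 a2 a3)) by (apply sqrt_lt_R0; exact HS).
  assert (Hq2 : (sqrt (SS a0 a1 a2 a3))^2 = SS a0 a1 a2 a3) by (simpl; rewrite Rmult_1_r; apply sqrt_sqrt; lra).
  unfold Xrem. cbv zeta.
  set (q := sqrt (SS a0 a1 a2 a3)) in *.
  set (r := RR a0 a1 a2 a3) in *.
  set (p1 := PP1 a0 a1 a2 a3) in *. set (p2 := PP2 a0 a1 a2 a3) in *. set (p3 := PP3 a0 a1 a2 a3) in *.
  set (G := Gamma mu eps ph Ph) in *.
  set (c := cos ph) in *.
  set (D := 1 + eps * c) in *.
  assert (Hp1 : p1^2 <= r^2) by nra.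
  assert (HI1 := ineq1 p1 r q ltac:(lra) Hp1 Hq ltac:(lra)).
  assert (HI2 := ineq2 p1 r q ltac:(lra) Hp1 Hq ltac:(lra)).
  assert (HP : Rabs (p1^2 + p2^2 - p3^2 * eps * c) <= r^2).
  { apply Rabs_le. assert (-1 <= eps * c <= 1) by (split; nra). split; nra. }
  set (X := (1 - mu) * (3 * (/ q + p1 - 1) + 2 * (p1 - (p1 + r ^ 2) / q ^ 3)) +
     7 / 2 * (p1 ^ 2 + p2 ^ 2 - p3 ^ 2 * eps * c)).
  assert (HX : Rabs X <= 81/2 * r^2).
  { unfold X. eapply Rle_trans; [apply Rabs_triang|].
    rewrite (Rabs_mult (1-mu)), (Rabs_mult (7/2)), (Rabs_pos_eq (1-mu)), (Rabs_pos_eq (7/2)) by lra.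
    assert (Rabs (3 * (/ q + p1 - 1) + 2 * (p1 - (p1 + r ^ 2) / q ^ 3)) <= 37 * r^2).
    { eapply Rle_trans; [apply Rabs_triang|]. rewrite (Rabs_mult 3), (Rabs_mult 2), (Rabs_pos_eq 3), (Rabs_pos_eq 2) by lra. lra. }
    assert (0 <= Rabs (3 * (/ q + p1 - 1) + 2 * (p1 - (p1 + r ^ 2) / q ^ 3))) by apply Rabs_pos.
    nra. }
  assert (HZ : Rabs (r * X / (2 * D)) <= (81/2 * r^3) / (2 * (1 - eps))).
  { apply abs_div_le. lra. lra. rewrite Rabs_mult, (Rabs_pos_eq r) by lra.
    assert (0 <= Rabs X) by apply Rabs_pos. nra. }
  assert (HZ' : (mu + r * X) / (2 * D) = mu / (2 * D) + r * X / (2 * D)) by (field; lra).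
  rewrite HZ'.
  assert (Hm : mu / 4 <= mu / (2 * D)).
  { unfold Rdiv. apply Rmult_le_compat_l; [lra|]. apply Rinv_le_contravar; lra. }
  set (w := r^3 / (1 - eps)).
  assert (Hw : (81/2 * r^3) / (2 * (1 - eps)) = 81/4 * w) by (unfold w; field; lra).
  assert (Hw1 : r^3 <= w).
  { unfold w. apply Rle_trans with (r^3 / 1); [lra|]. unfold Rdiv. apply Rmult_le_compat_l; [nra|].
    apply Rinv_le_contravar; lra. }
  assert (HGw : 100 * w <= G * r).
  { unfold w. apply (Rmult_le_reg_r (1 - eps)); [lra|].
    replace (100 * (r^3 / (1 - eps)) * (1 - eps)) with (100 * r^2 * r) by (field; lra). nra. }
  rewrite Hw in HZ.
  assert (HZl := proj1 (proj1 (Rabs_le_between _ _) HZ)).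
  assert (HB3 : (BB0 a0 a1 a2 a3)^2 + (BB1 a0 a1 a2 a3)^2 + (BB2 a0 a1 a2 a3)^2 + (BB3 a0 a1 a2 a3)^2 <= 4 * r^3).
  { rewrite HB. assert (p1^2 + p2^2 <= r^2) by nra. nra. }
  match goal with |- _ <= ?s1 + ?s2 + ?s3 + ?s4 - _ + _ + _ + 0 / 2 =>
    assert (0 <= s1) by apply pow2_ge_0; assert (0 <= s2) by apply pow2_ge_0; assert (0 <= s3) by apply pow2_ge_0; assert (0 <= s4) by apply pow2_ge_0 end.
  replace (3 / 2 * G * r) with (3/2 * (G * r)) by ring. assert (0 <= r^3) by (apply pow_le; lra). lra.
Qed.

Lemma D_mult (f g : R -> R) (x df dg : R) : is_derive f x df -> is_derive g x dg ->
  is_derive (fun t => f t * g t) x (df * g x + f x * dg).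
Proof. intros Hf Hg. exact (is_derive_mult f g x df dg Hf Hg Rmult_comm). Qed.

Lemma D_plus (f g : R -> R) (x df dg : R) : is_derive f x df -> is_derive g x dg ->
  is_derive (fun t => f t + g t) x (df + dg).
Proof. intros Hf Hg. exact (is_derive_plus f g x df dg Hf Hg). Qed.

Lemma D_opp (f : R -> R) (x df : R) : is_derive f x df -> is_derive (fun t => - f t) x (- df).
Proof. intros Hf. exact (is_derive_opp f x df Hf). Qed.

Lemma D_comp (h g : R -> R) (x dh dg : R) : is_derive h (g x) dh -> is_derive g x dg ->
  is_derive (fun t => h (g t)) x (dg * dh).
Proof. intros Hh Hg. exact (@is_derive_comp R_AbsRing R_NormedModule h g x dh dg Hh Hg). Qed.

Lemma D_val (f : R -> R) (x l l' : R) : is_derive f x l -> l = l' -> is_derive f x l'.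
Proof. intros H E; subst; exact H. Qed.

Lemma D_ext (f g : R -> R) (x l : R) : (forall t, f t = g t) -> is_derive f x l -> is_derive g x l.
Proof. intros E H. exact (is_derive_ext f g x l E H). Qed.

Lemma mvt_bounds (g g' : R -> R) a b lo hi : a <= b ->
  (forall t, a <= t <= b -> is_derive g t (g' t)) ->
  (forall t, a <= t <= b -> lo <= g' t <= hi) ->
  lo * (b - a) <= g b - g a <= hi * (b - a).
Proof.
  intros Hab Hd Hb. destruct (Req_dec a b) as [E|NE].
  - subst. replace (g b - g b) with 0 by ring. split; nra.
  - assert (Hlt : a < b) by lra.
    destruct (MVT_cor2 g g' a b Hlt) as [c [Hc Hc2]].
    { intros c Hc. apply is_derive_Reals. apply Hd. lra. }
    rewrite Hc. specialize (Hb c ltac:(lra)). split; nra.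
Qed.

Lemma conv_len (r J j : R -> R) x y a rho : x <= y -> 0 < a ->
  (forall t, x <= t <= y -> is_derive r t (J t)) ->
  (forall t, x <= t <= y -> is_derive J t (j t)) ->
  (forall t, x <= t <= y -> a <= j t) ->
  (forall t, x <= t <= y -> 0 <= r t <= rho) ->
  (y - x)^2 <= 8 * rho / a.
Proof.
  intros Hxy Ha Hr HJ Hj Hb.
  set (m := (x + y) / 2).
  set (h := fun t => r t - a * (t - m)^2 / 2).
  set (h' := fun t => J t - a * (t - m)).
  assert (Hh : forall t, x <= t <= y -> is_derive h t (h' t)).
  { intros t Ht. unfold h, h'.
    apply (D_plus r (fun t => - (a * (t - m)^2 / 2))).
    - apply Hr; auto.
    - apply (D_val _ _ (- (a * (2 * (t - m)) / 2))); [|field].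
      apply D_opp. auto_derive; auto. lazymatch goal with |- ?u = ?v => change (@eq R u v) end. field. }
  assert (Hh' : forall t, x <= t <= y -> is_derive h' t (j t - a)).
  { intros t Ht. unfold h'.
    apply (D_plus J (fun t => - (a * (t - m)))).
    - apply HJ; auto.
    - apply (D_val _ _ (- (a * 1))); [|ring].
      apply D_opp. auto_derive; auto. }
  assert (Hmono : forall u v, x <= u -> u <= v -> v <= y -> h' u <= h' v).
  { intros u v Hu Huv Hv.
    assert (H := mvt_bounds h' (fun t => j t - a) u v 0 1000000 Huv).
    destruct (Req_dec u v) as [E|NE]; [subst; lra|].
    destruct (MVT_cor2 h' (fun t => j t - a) u v ltac:(lra)) as [c [Hc Hc2]].
    { intros c Hc. apply is_derive_Reals. apply Hh'. lra. }
    specialize (Hj c ltac:(lra)). nra. }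
  destruct (Req_dec x y) as [E|NE].
  - subst. replace ((y - y)^2) with 0 by ring. apply Rle_mult_inv_pos; [|lra].
    destruct (Hb y ltac:(lra)). lra.
  - assert (Hlt : x < y) by lra.
    destruct (MVT_cor2 h h' x m ltac:(unfold m; lra)) as [c1 [E1 Hc1]].
    { intros c Hc. apply is_derive_Reals. apply Hh. unfold m in *; lra. }
    destruct (MVT_cor2 h h' m y ltac:(unfold m; lra)) as [c2 [E2 Hc2]].
    { intros c Hc. apply is_derive_Reals. apply Hh. unfold m in *; lra. }
    assert (Hm12 : h' c1 <= h' c2) by (apply Hmono; unfold m in *; lra).
    assert (Hym : y - m = m - x) by (unfold m; field).
    assert (Hcomb : h m - h x <= h y - h m) by (rewrite Hym in E2; nra).
    unfold h in Hcomb.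
    destruct (Hb x ltac:(lra)). destruct (Hb y ltac:(lra)). destruct (Hb m ltac:(unfold m; lra)).
    replace ((x - m)^2) with ((y - x)^2/4) in Hcomb by (unfold m; field).
    replace ((y - m)^2) with ((y - x)^2/4) in Hcomb by (unfold m; field).
    replace ((m - m)^2) with 0 in Hcomb by ring.
    apply (Rmult_le_reg_r a); [lra|]. unfold Rdiv. rewrite Rmult_assoc, Rinv_l by lra. nra.
Qed.

Lemma mvt_lo (g g' : R -> R) a b lo : a <= b ->
  (forall t, a <= t <= b -> is_derive g t (g' t)) ->
  (forall t, a <= t <= b -> lo <= g' t) ->
  lo * (b - a) <= g b - g a.
Proof.
  intros Hab Hd Hb. destruct (Req_dec a b) as [E|NE].
  - subst. replace (g b - g b) with 0 by ring. nra.
  - assert (Hlt : a < b) by lra.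
    destruct (MVT_cor2 g g' a b Hlt) as [c [Hc Hc2]].
    { intros c Hc. apply is_derive_Reals. apply Hd. lra. }
    rewrite Hc. specialize (Hb c ltac:(lra)). nra.
Qed.

Lemma mvt_abs (g g' : R -> R) a b M : a <= b ->
  (forall t, a <= t <= b -> is_derive g t (g' t)) ->
  (forall t, a <= t <= b -> Rabs (g' t) <= M) ->
  Rabs (g b - g a) <= M * (b - a).
Proof.
  intros Hab Hd Hb.
  assert (H := mvt_bounds g g' a b (-M) M Hab Hd).
  assert (H2 : forall t, a <= t <= b -> -M <= g' t <= M) by (intros t Ht; apply Rabs_le_between; auto).
  specialize (H H2). apply Rabs_le. lra.
Qed.

Lemma deriv_cont (f : R -> R) x l : is_derive f x l -> continuity_pt f x.
Proof.
  intros H. apply is_derive_Reals in H.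
  apply derivable_continuous_pt. exists l. exact H.
Qed.

Lemma cont_eps (f : R -> R) x : continuity_pt f x ->
  forall e, 0 < e -> exists d, 0 < d /\ forall y, Rabs (y - x) < d -> Rabs (f y - f x) < e.
Proof.
  intros H e He. destruct (H e He) as [d [Hd Hy]].
  exists d. split; auto. intros y Hyd.
  destruct (Req_dec y x) as [E|NE].
  - subst. replace (f x - f x) with 0 by ring. rewrite Rabs_R0. exact He.
  - apply (Hy y). split. { split; [exact I|]. auto. } exact Hyd.
Qed.

Lemma bootstrap (G : R -> R) a b lo : a <= b ->
  (forall t, a <= t <= b -> continuity_pt G t) -> lo < G a ->
  (forall t, a <= t <= b -> (forall s, a <= s <= t -> lo <= G s) -> forall s, a <= s <= t -> lo < G s) ->
  forall s, a <= s <= b -> lo <= G s.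
Proof.
  intros Hab Hc Ha Hstep.
  set (E := fun t => a <= t <= b /\ forall s, a <= s <= t -> lo <= G s).
  assert (HEa : E a).
  { split; [lra|]. intros s Hs. replace s with a by lra. lra. }
  assert (Hbd : bound E) by (exists b; intros t [Ht _]; lra).
  destruct (completeness E Hbd (ex_intro _ a HEa)) as [T [HT1 HT2]].
  assert (HaT : a <= T) by (apply HT1; exact HEa).
  assert (HTb : T <= b) by (apply HT2; intros t [Ht _]; lra).
  assert (Hbelow : forall s, a <= s < T -> lo <= G s).
  { intros s Hs. destruct (Rle_or_lt lo (G s)) as [Hl|Hl]; auto.
    exfalso.
    assert (Hub : is_upper_bound E s).
    { intros t [Ht Ht2]. destruct (Rle_or_lt t s) as [|Hts]; auto.
      exfalso. specialize (Ht2 s ltac:(lra)). lra. }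
    specialize (HT2 s Hub). lra. }
  assert (HPT : forall s, a <= s <= T -> lo <= G s).
  { intros s Hs. destruct (Rle_or_lt T s) as [HsT|HsT]; [|apply Hbelow; lra].
    replace s with T by lra.
    destruct (Rle_or_lt lo (G T)) as [Hl|Hl]; auto. exfalso.
    destruct (cont_eps G T (Hc T ltac:(lra)) (lo - G T) ltac:(lra)) as [d [Hd Hy]].
    destruct (Req_dec T a) as [E1|E1].
    - rewrite E1 in Hl. lra.
    - set (x := Rmax a (T - d/2)).
      assert (Hx1 : a <= x) by apply Rmax_l.
      assert (Hx2 : x < T) by (unfold x; apply Rmax_lub_lt; lra).
      assert (Hx3 : T - d/2 <= x) by apply Rmax_r.
      specialize (Hbelow x ltac:(lra)).
      assert (Hxx : Rabs (x - T) < d) by (apply Rabs_def1; lra).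
      specialize (Hy x Hxx). apply Rabs_def2 in Hy. lra. }
  assert (HgT := Hstep T ltac:(lra) HPT).
  destruct (Req_dec T b) as [EB|NB].
  - intros s Hs. apply HPT. lra.
  - exfalso.
    assert (HGT := HgT T ltac:(lra)).
    destruct (cont_eps G T (Hc T ltac:(lra)) (G T - lo) ltac:(lra)) as [d [Hd Hy]].
    set (t' := Rmin b (T + d/2)).
    assert (Ht'1 : t' <= b) by apply Rmin_l.
    assert (Ht'2 : T < t') by (unfold t'; apply Rmin_glb_lt; lra).
    assert (Ht'3 : t' <= T + d/2) by apply Rmin_r.
    assert (HE' : E t').
    { split; [lra|]. intros s Hs. destruct (Rle_or_lt s T) as [HsT|HsT].
      - apply HPT; lra.
      - assert (Rabs (s - T) < d) by (apply Rabs_def1; lra).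
        specialize (Hy s H). apply Rabs_def2 in Hy. lra. }
    specialize (HT1 t' HE'). lra.
Qed.

Lemma DV0 mu eps (v : nat -> R) : 0 < SS (v 0%nat) (v 1%nat) (v 2%nat) (v 3%nat) -> 1 + eps * cos (v 4%nat) <> 0 ->
  Derive (fun x => Kfun mu eps (upd v 0 x)) (v 0%nat) = dKa mu eps (v 0%nat) (v 1%nat) (v 2%nat) (v 3%nat) (v 4%nat) (v 5%nat) (v 6%nat) (v 7%nat) (v 8%nat) (v 9%nat) 1 0 0 0.
Proof.
  intros HS HD.
  rewrite (Derive_ext _ (fun x => Kx mu eps x (v 1%nat) (v 2%nat) (v 3%nat) (v 4%nat) (v 5%nat) (v 6%nat) (v 7%nat) (v 8%nat) (v 9%nat))).
  2: { intro t; rewrite Kfun_eq; unfold upd; simpl; reflexivity. }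
  apply is_derive_unique. apply dK0; auto.
Qed.

Lemma DV1 mu eps (v : nat -> R) : 0 < SS (v 0%nat) (v 1%nat) (v 2%nat) (v 3%nat) -> 1 + eps * cos (v 4%nat) <> 0 ->
  Derive (fun x => Kfun mu eps (upd v 1 x)) (v 1%nat) = dKa mu eps (v 0%nat) (v 1%nat) (v 2%nat) (v 3%nat) (v 4%nat) (v 5%nat) (v 6%nat) (v 7%nat) (v 8%nat) (v 9%nat) 0 1 0 0.
Proof.
  intros HS HD.
  rewrite (Derive_ext _ (fun x => Kx mu eps (v 0%nat) x (v 2%nat) (v 3%nat) (v 4%nat) (v 5%nat) (v 6%nat) (v 7%nat) (v 8%nat) (v 9%nat))).
  2: { intro t; rewrite Kfun_eq; unfold upd; simpl; reflexivity. }
  apply is_derive_unique. apply dK1; auto.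
Qed.

Lemma DV2 mu eps (v : nat -> R) : 0 < SS (v 0%nat) (v 1%nat) (v 2%nat) (v 3%nat) -> 1 + eps * cos (v 4%nat) <> 0 ->
  Derive (fun x => Kfun mu eps (upd v 2 x)) (v 2%nat) = dKa mu eps (v 0%nat) (v 1%nat) (v 2%nat) (v 3%nat) (v 4%nat) (v 5%nat) (v 6%nat) (v 7%nat) (v 8%nat) (v 9%nat) 0 0 1 0.
Proof.
  intros HS HD.
  rewrite (Derive_ext _ (fun x => Kx mu eps (v 0%nat) (v 1%nat) x (v 3%nat) (v 4%nat) (v 5%nat) (v 6%nat) (v 7%nat) (v 8%nat) (v 9%nat))).
  2: { intro t; rewrite Kfun_eq; unfold upd; simpl; reflexivity. }
  apply is_derive_unique. apply dK2; auto.
Qed.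

Lemma DV3 mu eps (v : nat -> R) : 0 < SS (v 0%nat) (v 1%nat) (v 2%nat) (v 3%nat) -> 1 + eps * cos (v 4%nat) <> 0 ->
  Derive (fun x => Kfun mu eps (upd v 3 x)) (v 3%nat) = dKa mu eps (v 0%nat) (v 1%nat) (v 2%nat) (v 3%nat) (v 4%nat) (v 5%nat) (v 6%nat) (v 7%nat) (v 8%nat) (v 9%nat) 0 0 0 1.
Proof.
  intros HS HD.
  rewrite (Derive_ext _ (fun x => Kx mu eps (v 0%nat) (v 1%nat) (v 2%nat) x (v 4%nat) (v 5%nat) (v 6%nat) (v 7%nat) (v 8%nat) (v 9%nat))).
  2: { intro t; rewrite Kfun_eq; unfold upd; simpl; reflexivity. }
  apply is_derive_unique. apply dK3; auto.
Qed.

Lemma DV4 mu eps (v : nat -> R) : 0 < SS (v 0%nat) (v 1%nat) (v 2%nat) (v 3%nat) -> 1 + eps * cos (v 4%nat) <> 0 ->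
  Derive (fun x => Kfun mu eps (upd v 4 x)) (v 4%nat) = dKph mu eps (v 0%nat) (v 1%nat) (v 2%nat) (v 3%nat) (v 4%nat).
Proof.
  intros HS HD.
  rewrite (Derive_ext _ (fun x => Kx mu eps (v 0%nat) (v 1%nat) (v 2%nat) (v 3%nat) x (v 5%nat) (v 6%nat) (v 7%nat) (v 8%nat) (v 9%nat))).
  2: { intro t; rewrite Kfun_eq; unfold upd; simpl; reflexivity. }
  apply is_derive_unique. apply dKph_ok; auto.
Qed.

Lemma DV5 mu eps (v : nat -> R) : 
  Derive (fun x => Kfun mu eps (upd v 5 x)) (v 5%nat) = ((v 5%nat) - BB0 (v 0%nat) (v 1%nat) (v 2%nat) (v 3%nat))/4.
Proof.
  
  rewrite (Derive_ext _ (fun x => Kx mu eps (v 0%nat) (v 1%nat) (v 2%nat) (v 3%nat) (v 4%nat) x (v 6%nat) (v 7%nat) (v 8%nat) (v 9%nat))).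
  2: { intro t; rewrite Kfun_eq; unfold upd; simpl; reflexivity. }
  apply is_derive_unique. apply dKU0; auto.
Qed.

Lemma DV6 mu eps (v : nat -> R) : 
  Derive (fun x => Kfun mu eps (upd v 6 x)) (v 6%nat) = ((v 6%nat) - BB1 (v 0%nat) (v 1%nat) (v 2%nat) (v 3%nat))/4.
Proof.
  
  rewrite (Derive_ext _ (fun x => Kx mu eps (v 0%nat) (v 1%nat) (v 2%nat) (v 3%nat) (v 4%nat) (v 5%nat) x (v 7%nat) (v 8%nat) (v 9%nat))).
  2: { intro t; rewrite Kfun_eq; unfold upd; simpl; reflexivity. }
  apply is_derive_unique. apply dKU1; auto.
Qed.

Lemma DV7 mu eps (v : nat -> R) : 
  Derive (fun x => Kfun mu eps (upd v 7 x)) (v 7%nat) = ((v 7%nat) - BB2 (v 0%nat) (v 1%nat) (v 2%nat) (v 3%nat))/4.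
Proof.
  
  rewrite (Derive_ext _ (fun x => Kx mu eps (v 0%nat) (v 1%nat) (v 2%nat) (v 3%nat) (v 4%nat) (v 5%nat) (v 6%nat) x (v 8%nat) (v 9%nat))).
  2: { intro t; rewrite Kfun_eq; unfold upd; simpl; reflexivity. }
  apply is_derive_unique. apply dKU2; auto.
Qed.

Lemma DV8 mu eps (v : nat -> R) : 
  Derive (fun x => Kfun mu eps (upd v 8 x)) (v 8%nat) = ((v 8%nat) - BB3 (v 0%nat) (v 1%nat) (v 2%nat) (v 3%nat))/4.
Proof.
  
  rewrite (Derive_ext _ (fun x => Kx mu eps (v 0%nat) (v 1%nat) (v 2%nat) (v 3%nat) (v 4%nat) (v 5%nat) (v 6%nat) (v 7%nat) x (v 9%nat))).
  2: { intro t; rewrite Kfun_eq; unfold upd; simpl; reflexivity. }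
  apply is_derive_unique. apply dKU3; auto.
Qed.

Lemma DV9 mu eps (v : nat -> R) : 
  Derive (fun x => Kfun mu eps (upd v 9 x)) (v 9%nat) = RR (v 0%nat) (v 1%nat) (v 2%nat) (v 3%nat).
Proof.
  
  rewrite (Derive_ext _ (fun x => Kx mu eps (v 0%nat) (v 1%nat) (v 2%nat) (v 3%nat) (v 4%nat) (v 5%nat) (v 6%nat) (v 7%nat) (v 8%nat) x)).
  2: { intro t; rewrite Kfun_eq; unfold upd; simpl; reflexivity. }
  apply is_derive_unique. apply dKPh; auto.
Qed.

Definition Jv (v : nat -> R) := (v 0%nat * v 5%nat + v 1%nat * v 6%nat + v 2%nat * v 7%nat + v 3%nat * v 8%nat) / 2.

Lemma Ksol mu eps st s1 s2 s i : K_solution mu eps st s1 s2 -> s1 <= s <= s2 -> (i < 5)%nat ->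
  is_derive (fun t => st t i) s
      (Derive (fun x => Kfun mu eps (upd (st s) (i + 5) x)) (st s (i + 5)%nat))
  /\ is_derive (fun t => st t (i + 5)%nat) s
      (- Derive (fun x => Kfun mu eps (upd (st s) i x)) (st s i)).
Proof. intros H Hs Hi. apply H; auto. Qed.

Lemma L_phi mu eps st s1 s2 s : K_solution mu eps st s1 s2 -> s1 <= s <= s2 ->
  is_derive (fun t => st t 4%nat) s (RR (st s 0%nat) (st s 1%nat) (st s 2%nat) (st s 3%nat)).
Proof.
  intros H Hs. destruct (Ksol mu eps st s1 s2 s 4 H Hs ltac:(lia)) as [H1 _].
  cbv [Nat.add] in H1. rewrite DV9 in H1. exact H1.
Qed.

Lemma L_Gamma mu eps st s1 s2 s : K_solution mu eps st s1 s2 -> s1 <= s <= s2 -> 0 < eps < 1 ->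
  RR (st s 0%nat) (st s 1%nat) (st s 2%nat) (st s 3%nat) <= 1/10 ->
  is_derive (fun t => Gamma mu eps (st t 4%nat) (st t 9%nat)) s
     (Gdot mu eps (st s 0%nat) (st s 1%nat) (st s 2%nat) (st s 3%nat) (st s 4%nat)).
Proof.
  intros H Hs He Hr.
  assert (HS := SS_pos _ _ _ _ Hr).
  assert (HD : 1 + eps * cos (st s 4%nat) <> 0) by (pose proof (COS_bound (st s 4%nat)); nra).
  destruct (Ksol mu eps st s1 s2 s 4 H Hs ltac:(lia)) as [H4 H9].
  cbv [Nat.add] in H4, H9. rewrite DV9 in H4. rewrite DV4 in H9 by auto.
  unfold Gamma, Gdot.
  eapply D_val.
  - apply (D_plus (fun t => - st t 9%nat) (fun t => (3 - 4 * mu + mu^2) / (2 * (1 + eps * cos (st t 4%nat))))).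
    + apply D_opp; exact H9.
    + apply (D_comp (fun p => (3 - 4 * mu + mu^2) / (2 * (1 + eps * cos p))) (fun t => st t 4%nat)); [|exact H4].
      auto_derive; [intro E; apply HD; lra | reflexivity].
  - lazymatch goal with |- ?u = ?w => change (@eq R u w) end. field; exact HD.
Qed.

Lemma L_u mu eps st s1 s2 s : K_solution mu eps st s1 s2 -> s1 <= s <= s2 ->
  is_derive (fun t => st t 0%nat) s ((st s 5%nat - BB0 (st s 0%nat) (st s 1%nat) (st s 2%nat) (st s 3%nat))/4) /\
  is_derive (fun t => st t 1%nat) s ((st s 6%nat - BB1 (st s 0%nat) (st s 1%nat) (st s 2%nat) (st s 3%nat))/4) /\
  is_derive (fun t => st t 2%nat) s ((st s 7%nat - BB2 (st s 0%nat) (st s 1%nat) (st s 2%nat) (st s 3%nat))/4) /\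
  is_derive (fun t => st t 3%nat) s ((st s 8%nat - BB3 (st s 0%nat) (st s 1%nat) (st s 2%nat) (st s 3%nat))/4).
Proof.
  intros H Hs.
  destruct (Ksol mu eps st s1 s2 s 0 H Hs ltac:(lia)) as [H0 _].
  destruct (Ksol mu eps st s1 s2 s 1 H Hs ltac:(lia)) as [H1 _].
  destruct (Ksol mu eps st s1 s2 s 2 H Hs ltac:(lia)) as [H2 _].
  destruct (Ksol mu eps st s1 s2 s 3 H Hs ltac:(lia)) as [H3 _].
  cbv [Nat.add] in H0, H1, H2, H3.
  rewrite DV5 in H0. rewrite DV6 in H1. rewrite DV7 in H2. rewrite DV8 in H3.
  auto.
Qed.

Lemma L_U mu eps st s1 s2 s : K_solution mu eps st s1 s2 -> s1 <= s <= s2 -> 0 < eps < 1 ->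
  RR (st s 0%nat) (st s 1%nat) (st s 2%nat) (st s 3%nat) <= 1/10 ->
  is_derive (fun t => st t 5%nat) s (- dKa mu eps (st s 0%nat) (st s 1%nat) (st s 2%nat) (st s 3%nat) (st s 4%nat) (st s 5%nat) (st s 6%nat) (st s 7%nat) (st s 8%nat) (st s 9%nat) 1 0 0 0) /\
  is_derive (fun t => st t 6%nat) s (- dKa mu eps (st s 0%nat) (st s 1%nat) (st s 2%nat) (st s 3%nat) (st s 4%nat) (st s 5%nat) (st s 6%nat) (st s 7%nat) (st s 8%nat) (st s 9%nat) 0 1 0 0) /\
  is_derive (fun t => st t 7%nat) s (- dKa mu eps (st s 0%nat) (st s 1%nat) (st s 2%nat) (st s 3%nat) (st s 4%nat) (st s 5%nat) (st s 6%nat) (st s 7%nat) (st s 8%nat) (st s 9%nat) 0 0 1 0) /\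
  is_derive (fun t => st t 8%nat) s (- dKa mu eps (st s 0%nat) (st s 1%nat) (st s 2%nat) (st s 3%nat) (st s 4%nat) (st s 5%nat) (st s 6%nat) (st s 7%nat) (st s 8%nat) (st s 9%nat) 0 0 0 1).
Proof.
  intros H Hs He Hr.
  assert (HS := SS_pos _ _ _ _ Hr).
  assert (HD : 1 + eps * cos (st s 4%nat) <> 0) by (pose proof (COS_bound (st s 4%nat)); nra).
  destruct (Ksol mu eps st s1 s2 s 0 H Hs ltac:(lia)) as [_ H0].
  destruct (Ksol mu eps st s1 s2 s 1 H Hs ltac:(lia)) as [_ H1].
  destruct (Ksol mu eps st s1 s2 s 2 H Hs ltac:(lia)) as [_ H2].
  destruct (Ksol mu eps st s1 s2 s 3 H Hs ltac:(lia)) as [_ H3].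
  cbv [Nat.add] in H0, H1, H2, H3.
  rewrite DV0 in H0 by auto. rewrite DV1 in H1 by auto. rewrite DV2 in H2 by auto. rewrite DV3 in H3 by auto.
  auto.
Qed.


Lemma L_r mu eps st s1 s2 s : K_solution mu eps st s1 s2 -> s1 <= s <= s2 ->
  is_derive (fun t => RR (st t 0%nat) (st t 1%nat) (st t 2%nat) (st t 3%nat)) s (Jv (st s)).
Proof.
  intros H Hs. destruct (L_u mu eps st s1 s2 s H Hs) as [H0 [H1 [H2 H3]]].
  apply (D_ext (fun t => st t 0%nat * st t 0%nat + st t 1%nat * st t 1%nat + st t 2%nat * st t 2%nat + st t 3%nat * st t 3%nat)).
  { intro t. unfold RR. ring. }
  eapply D_val.
  - apply D_plus; [apply D_plus; [apply D_plus|]|]; (apply D_mult; [first [exact H0|exact H1|exact H2|exact H3]|first [exact H0|exact H1|exact H2|exact H3]]).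
  - cbv beta. unfold Jv, BB0, BB1, BB2, BB3, PP1, PP2. lazymatch goal with |- ?u = ?w => change (@eq R u w) end. field.
Qed.

Lemma L_J mu eps st s1 s2 s : K_solution mu eps st s1 s2 -> s1 <= s <= s2 -> 0 < eps < 1 ->
  RR (st s 0%nat) (st s 1%nat) (st s 2%nat) (st s 3%nat) <= 1/10 ->
  is_derive (fun t => Jv (st t)) s (Jdot mu eps (st s 0%nat) (st s 1%nat) (st s 2%nat) (st s 3%nat) (st s 4%nat) (st s 5%nat) (st s 6%nat) (st s 7%nat) (st s 8%nat) (st s 9%nat)).
Proof.
  intros H Hs He Hr. destruct (L_u mu eps st s1 s2 s H Hs) as [H0 [H1 [H2 H3]]].
  destruct (L_U mu eps st s1 s2 s H Hs He Hr) as [H5 [H6 [H7 H8]]].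
  unfold Jv.
  apply (D_ext (fun t => / 2 * (st t 0%nat * st t 5%nat + st t 1%nat * st t 6%nat + st t 2%nat * st t 7%nat + st t 3%nat * st t 8%nat))).
  { intro t. field. }
  eapply D_val.
  - apply (is_derive_scal (fun t => st t 0%nat * st t 5%nat + st t 1%nat * st t 6%nat + st t 2%nat * st t 7%nat + st t 3%nat * st t 8%nat)).
    apply D_plus; [apply D_plus; [apply D_plus|]|]; (apply D_mult; [first [exact H0|exact H1|exact H2|exact H3]|first [exact H5|exact H6|exact H7|exact H8]]).
  - cbv beta. unfold Jdot. lazymatch goal with |- ?u = ?w => change (@eq R u w) end. field.
Qed.

Lemma Rpower_third mu : 0 < mu -> (Rpower mu (1/3))^3 = mu /\ 0 < Rpower mu (1/3).
Proof.
  intros H. split.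
  - rewrite <- Rpower_pow by (unfold Rpower; apply exp_pos).
    rewrite Rpower_mult. replace (1/3 * INR 3) with 1 by (simpl; field). apply Rpower_1; auto.
  - unfold Rpower; apply exp_pos.
Qed.

Lemma Rpower_32 x : 0 < x -> Rpower x (3/2) = x * sqrt x.
Proof. intros H. replace (3/2) with (1 + /2) by field. rewrite Rpower_plus, Rpower_1, Rpower_sqrt; auto. Qed.

Theorem mainTheorem4 :
  exists mu0 c : R, 0 < mu0 < / 10 /\ 0 < c /\
  forall mu eps : R, 0 < mu <= mu0 -> 0 < eps < 1 ->
  forall (w : R -> nat -> R) (f1 f2 : R) (st : R -> nat -> R) (s1 s2 : R),
    f1 < f2 ->
    ER3BP_solution mu eps w f1 f2 ->
    qnorm mu (w f1) = Rpower mu (1 / 3) ->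
    qnorm mu (w f2) = Rpower mu (1 / 3) ->
    (forall f, f1 < f < f2 -> 0 < qnorm mu (w f) < Rpower mu (1 / 3)) ->
    s1 <= s2 ->
    K_solution mu eps st s1 s2 ->
    (forall s, s1 <= s <= s2 ->
       lfun (uof (st s)) (Uof (st s)) = 0 /\ Kfun mu eps (st s) = 0) ->
    phiof (st s1) = f1 -> phiof (st s2) = f2 ->
    (forall s, s1 <= s <= s2 ->
       pi1 (uof (st s)) = q1 mu (w (phiof (st s))) /\
       pi2 (uof (st s)) = w (phiof (st s)) 1%nat /\
       pi3 (uof (st s)) = w (phiof (st s)) 2%nat) ->
    let Gamma0 := Gamma mu eps (phiof (st s1)) (Phiof (st s1)) in
    0 < Gamma0 ->
    mu < c * (1 - eps)^6 * Rpower Gamma0 (3 / 2) ->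
    forall s, s1 <= s <= s2 ->
      Gamma0 / 2 <= Gamma mu eps (phiof (st s)) (Phiof (st s)) <= 3 * Gamma0 / 2.
Proof.
  exists (1/1000), (1/8000). split; [lra|]. split; [lra|].
  intros mu eps Hmu Heps w f1 f2 st s1 s2 Hf12 HER Hq1 Hq2 Hqin Hs12 HKs Hlk Hphi1 Hphi2 Hpi Gamma0 HG0 Hmuc s Hs.
  destruct (Rpower_third mu ltac:(lra)) as [Hrho3 Hrho0].
  set (rho := Rpower mu (1/3)) in *.
  assert (Hrho1 : rho <= 1/10).
  { destruct (Rle_or_lt rho (1/10)) as [|Hc]; auto.
    assert (rho * rho > 1/100) by nra. nra. }
  set (r := fun t => RR (st t 0%nat) (st t 1%nat) (st t 2%nat) (st t 3%nat)).
  assert (Hphi_d : forall t, s1 <= t <= s2 -> is_derive (fun t => st t 4%nat) t (r t))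
    by (intros t Ht; apply (L_phi mu eps st s1 s2); auto).
  assert (Hr0 : forall t, 0 <= r t) by (intro; apply RR_nonneg).
  unfold phiof in Hphi1, Hphi2.
  assert (Hphi_rng : forall t, s1 <= t <= s2 -> f1 <= st t 4%nat <= f2).
  { intros t Ht. split.
    - assert (H := mvt_lo (fun t => st t 4%nat) r s1 t 0 ltac:(lra)
         ltac:(intros u Hu; apply Hphi_d; lra) ltac:(intros; apply Hr0)).
      cbv beta in H. lra.
    - assert (H := mvt_lo (fun t => st t 4%nat) r t s2 0 ltac:(lra)
         ltac:(intros u Hu; apply Hphi_d; lra) ltac:(intros; apply Hr0)).
      cbv beta in H. lra. }
  assert (Hqn : forall t, s1 <= t <= s2 -> qnorm mu (w (st t 4%nat)) = r t).
  { intros t Ht. destruct (Hpi t Ht) as [E1 [E2 E3]].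
    unfold qnorm. unfold phiof in E1, E2, E3. rewrite <- E1, <- E2, <- E3.
    change (pi1 (uof (st t))) with (PP1 (st t 0%nat) (st t 1%nat) (st t 2%nat) (st t 3%nat)).
    change (pi2 (uof (st t))) with (PP2 (st t 0%nat) (st t 1%nat) (st t 2%nat) (st t 3%nat)).
    change (pi3 (uof (st t))) with (PP3 (st t 0%nat) (st t 1%nat) (st t 2%nat) (st t 3%nat)).
    rewrite KS_id. apply sqrt_pow2. apply RR_nonneg. }
  assert (Hr_rho : forall t, s1 <= t <= s2 -> r t <= rho).
  { intros t Ht. rewrite <- (Hqn t Ht). destruct (Hphi_rng t Ht) as [Ha Hb].
    destruct (Req_dec (st t 4%nat) f1) as [E|NE1].
    - rewrite E, Hq1. lra.
    - destruct (Req_dec (st t 4%nat) f2) as [E|NE2].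
      + rewrite E, Hq2. lra.
      + assert (H := Hqin (st t 4%nat) ltac:(lra)). lra. }
  assert (Hr10 : forall t, s1 <= t <= s2 -> r t <= 1/10)
    by (intros t Ht; specialize (Hr_rho t Ht); lra).
  assert (Hr3 : forall t, s1 <= t <= s2 -> (r t)^3 <= mu).
  { intros t Ht. rewrite <- Hrho3. apply pow_incr. split; [apply Hr0|]. apply Hr_rho; auto. }
  assert (Hg0def : Gamma0 = Gamma mu eps (st s1 4%nat) (st s1 9%nat)) by reflexivity.
  clearbody Gamma0.
  set (g := sqrt Gamma0).
  assert (Hg0 : 0 < g) by (apply sqrt_lt_R0; auto).
  assert (Hg2 : g * g = Gamma0) by (apply sqrt_sqrt; lra).
  rewrite Rpower_32 in Hmuc by auto. fold g in Hmuc.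
  assert (He1 : 0 < 1 - eps) by lra.
  assert (Hrho_g : rho < g * (1-eps)^2 / 20).
  { destruct (Rlt_or_le rho (g * (1-eps)^2 / 20)) as [|Hc]; auto. exfalso.
    assert (HX : 0 <= g * (1-eps)^2 / 20) by (apply Rmult_le_pos; [apply Rmult_le_pos; nra|lra]).
    assert (H3 := pow_incr _ _ 3 (conj HX Hc)).
    rewrite Hrho3 in H3.
    replace ((g * (1 - eps) ^ 2 / 20) ^ 3) with (1/8000 * (1 - eps)^6 * (g * g * g)) in H3 by field.
    rewrite Hg2 in H3. lra. }
  set (Gm := fun t => Gamma mu eps (st t 4%nat) (st t 9%nat)).
  set (M := 9 * mu / (1 - eps)^2).
  assert (HGd : forall t, s1 <= t <= s2 ->
     is_derive Gm t (Gdot mu eps (st t 0%nat) (st t 1%nat) (st t 2%nat) (st t 3%nat) (st t 4%nat))).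
  { intros t Ht. apply (L_Gamma mu eps st s1 s2); [exact HKs| exact Ht | exact Heps | apply (Hr10 t Ht)]. }
  assert (HGb : forall t, s1 <= t <= s2 ->
     Rabs (Gdot mu eps (st t 0%nat) (st t 1%nat) (st t 2%nat) (st t 3%nat) (st t 4%nat)) <= M).
  { intros t Ht. apply Gdot_bound; [lra|lra|apply (Hr10 t Ht)|apply (Hr3 t Ht)]. }
  assert (Claim : forall t, s1 <= t <= s2 -> (forall s, s1 <= s <= t -> Gamma0/4 <= Gm s) ->
            forall s, s1 <= s <= t -> Gamma0/2 <= Gm s <= 3*Gamma0/2).
  { intros t Ht Hlow.
    assert (HL : (t - s1)^2 <= 8 * rho / (mu/4)).
    { apply (conv_len r (fun u => Jv (st u))
        (fun u => Jdot mu eps (st u 0%nat) (st u 1%nat) (st u 2%nat) (st u 3%nat) (st u 4%nat) (st u 5%nat) (st u 6%nat) (st u 7%nat) (st u 8%nat) (st u 9%nat))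
        s1 t (mu/4) rho).
      - lra.
      - lra.
      - intros u Hu. apply (L_r mu eps st s1 s2); [exact HKs|lra].
      - intros u Hu. apply (L_J mu eps st s1 s2); [exact HKs|lra|exact Heps|apply Hr10; lra].
      - intros u Hu. apply Jdot_bound; try lra.
        + apply Hr10; lra.
        + rewrite <- Kfun_eq. apply Hlk. lra.
        + specialize (Hlow u Hu). change (Gamma mu eps (st u 4%nat) (st u 9%nat)) with (Gm u).
          assert (Hru := Hr_rho u ltac:(lra)). assert (Hr0u := Hr0 u).
          change (RR (st u 0%nat) (st u 1%nat) (st u 2%nat) (st u 3%nat)) with (r u).
          assert (Hr2 : (r u)^2 <= rho^2) by (apply pow_incr; lra).
          assert (Hrg2 : rho^2 <= (g * (1-eps)^2 / 20)^2) by (apply pow_incr; split; lra).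
          assert (HE4 : (1-eps)^4 <= 1 - eps).
          { assert (Hx2 : (1-eps)^2 <= 1) by nra.
            assert (Hx3 : (1-eps)^3 <= 1) by (replace ((1-eps)^3) with ((1-eps)*(1-eps)^2) by ring; nra).
            replace ((1-eps)^4) with ((1-eps)*(1-eps)^3) by ring. nra. }
          nra.
      - intros u Hu. split; [apply Hr0|apply Hr_rho; lra]. }
    set (L := t - s1) in *.
    assert (HL0 : 0 <= L) by (unfold L; lra).
    assert (HML : M * L <= Gamma0 / 2).
    { set (E := (1 - eps)^2) in *.
      assert (HE0 : 0 < E) by (unfold E; nra).
      assert (HE1 : E <= 1) by (unfold E; nra).
      assert (H1 : mu * L^2 <= 32 * rho).
      { replace (8 * rho / (mu / 4)) with (32 * rho / mu) in HL by (field; lra).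
        apply (Rmult_le_compat_l mu) in HL; [|lra].
        replace (mu * (32 * rho / mu)) with (32 * rho) in HL by (field; lra). exact HL. }
      assert (H2 : (18 * mu * L)^2 <= 10368 * rho^4).
      { replace ((18 * mu * L)^2) with (324 * mu * (mu * L^2)) by ring.
        replace (10368 * rho^4) with (324 * rho^3 * (32 * rho)) by ring. rewrite Hrho3.
        apply Rmult_le_compat_l; [lra|exact H1]. }
      assert (H3 : rho^4 <= (g * E / 20)^4) by (apply pow_incr; split; lra).
      assert (H4 : (18 * mu * L)^2 <= (g * g * E)^2).
      { assert (HE2 : 0 < E^2 <= 1) by (split; nra).
        assert (E^4 <= E^2) by (replace (E^4) with (E^2 * E^2) by ring; nra).
        replace ((g * E / 20)^4) with (g^4 * E^4 / 160000) in H3 by field.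
        replace ((g * g * E)^2) with (g^4 * E^2) by ring.
        assert (0 < g^4) by (apply pow_lt; lra). nra. }
      assert (H5 : 18 * mu * L <= g * g * E).
      { destruct (Rle_or_lt (18 * mu * L) (g * g * E)) as [|Hc]; auto.
        assert (0 <= g * g * E) by nra. nra. }
      rewrite Hg2 in H5. unfold M.
      replace (9 * mu / E * L) with ((18 * mu * L) / (2 * E)) by (field; lra).
      apply (Rmult_le_reg_r (2 * E)); [lra|].
      unfold Rdiv. rewrite Rmult_assoc, Rinv_l by lra. nra. }
    intros s' Hs'.
    assert (H := mvt_abs Gm _ s1 s' M ltac:(lra) ltac:(intros u Hu; apply HGd; lra) ltac:(intros u Hu; apply HGb; lra)).
    assert (HGs1 : Gm s1 = Gamma0) by (unfold Gm; rewrite Hg0def; reflexivity).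
    rewrite HGs1 in H. apply Rabs_le_between in H.
    assert (HM0 : 0 <= M) by (unfold M; apply Rmult_le_pos; [lra|]; apply Rlt_le, Rinv_0_lt_compat; nra).
    assert (M * (s' - s1) <= M * L) by (apply Rmult_le_compat_l; [lra|unfold L; lra]).
    split; lra. }
  assert (Hall : forall s, s1 <= s <= s2 -> Gamma0/4 <= Gm s).
  { apply (bootstrap Gm s1 s2 (Gamma0/4)); auto.
    - intros t Ht. apply (deriv_cont _ _ _ (HGd t Ht)).
    - assert (HGs1 : Gm s1 = Gamma0) by (unfold Gm; rewrite Hg0def; reflexivity). lra.
    - intros t Ht Hlow s' Hs'. assert (H := Claim t Ht Hlow s' Hs'). lra. }
  exact (Claim s2 ltac:(lra) Hall s Hs).
Qed.
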